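(* Let $w=(u,v)\in\mathrm{WI}_n\times\mathrm{Cay}_n$. Then $\mathrm{Des}(u)\subseteq\mathrm{Des}(v)$ if and only if $(w^T)^T=w$. Moreover, $T$ is an involution on $\mathrm{Bur}_n$.
   Context: $\mathrm{Cay}_n$ is the set of Cayley permutations of length $n$ (words of positive integers in which every integer from $1$ to the maximum occurs), and $\mathrm{WI}_n$ the set of weakly increasing elements of $\mathrm{Cay}_n$. A pair $(u,v)\in\mathrm{WI}_n\times\mathrm{Cay}_n$ is viewed as a biword with columns $\binom{u(i)}{v(i)}$, $i=1,\dots,n$. The Burge transpose $(u,v)^T$ is obtained by turning every column $\binom{a}{b}$ upside down into $\binom{b}{a}$ and then sorting the columns in increasing order of top entry, breaking ties by decreasing order of bottom entry; it again lies in $\mathrm{WI}_n\times\mathrm{Cay}_n$. The weak descent set of a word $v$ of length $n$ is $\mathrm{Des}(v)=\{i\in[n-1]:v(i)\ge v(i+1)\}$. $\mathrm{Bur}_n=\{(u,v)\in\mathrm{WI}_n\times\mathrm{Cay}_n:\mathrm{Des}(u)\subseteq\mathrm{Des}(v)\}$ (Burge words). *)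

(* Defs.v *)
(* Words are seq nat; positions are 1-indexed as in the paper. *)
From mathcomp Require Import all_boot.
Set Implicit Arguments. Unset Strict Implicit. Unset Printing Implicit Defensive.

Definition wmax (v : seq nat) : nat := foldr maxn 0 v.

Definition Cay (n : nat) (v : seq nat) : bool :=
  [&& size v == n, all (fun x => 0 < x) v & all (fun k => k \in v) (iota 1 (wmax v))].

Definition WI (n : nat) (u : seq nat) : bool := Cay n u && sorted leq u.

Definition letter (v : seq nat) (i : nat) : nat := nth 0 v i.-1.

Definition Des (v : seq nat) : seq nat :=
  [seq i <- iota 1 (size v).-1 | letter v (i.+1) <= letter v i].

Definition burge_le (c d : nat * nat) : bool :=
  (c.1 < d.1) || ((c.1 == d.1) && (d.2 <= c.2)).

Definition burgeT (w : seq nat * seq nat) : seq nat * seq nat :=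
  let cols := sort burge_le [seq (p.2, p.1) | p <- zip w.1 w.2] in
  (unzip1 cols, unzip2 cols).

Definition Bur (n : nat) (w : seq nat * seq nat) : bool :=
  [&& WI n w.1, Cay n w.2 & all (fun i => i \in Des w.2) (Des w.1)].

(* Main.v *)
Require Import Defs.
From mathcomp Require Import all_boot zify.
Set Implicit Arguments.
Lemma bl_total : total burge_le.
Proof. move=> [a b] [c d]; rewrite /burge_le /=; lia. Qed.
Lemma bl_trans : transitive burge_le.
Proof. move=> [a b] [c d] [e f]; rewrite /burge_le /=; lia. Qed.
Lemma bl_anti : antisymmetric burge_le.
Proof. move=> [a b] [c d]; rewrite /burge_le /= => H. apply/eqP; rewrite xpair_eqE; lia. Qed.

Lemma burgeTT w : burgeT (burgeT w) =
  (unzip1 (sort burge_le (zip w.1 w.2)), unzip2 (sort burge_le (zip w.1 w.2))).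
Proof.
rewrite /burgeT /= zip_unzip.
set c := zip w.1 w.2.
have -> : sort burge_le [seq (p.2, p.1) | p <- sort burge_le [seq (p.2, p.1) | p <- c]]
   = sort burge_le c; last by [].
apply/(perm_sortP bl_total bl_trans bl_anti).
have -> : c = [seq (p.2, p.1) | p <- [seq (p.2, p.1) | p <- c]].
  by rewrite -map_comp map_id_in // => -[a b].
apply: perm_map; rewrite perm_sort; rewrite -map_comp map_id_in //; by move=> [a b].
Qed.

Lemma TT_sorted u v : size u = size v ->
  (burgeT (burgeT (u, v)) = (u, v) <-> sorted burge_le (zip u v)).
Proof.
move=> Hs; rewrite burgeTT /=; split.
- case=> H1 H2. have := sort_sorted bl_total (zip u v).
  by rewrite -[sort _ _]zip_unzip H1 H2.
- move=> H; rewrite (sorted_sort bl_trans H) unzip1_zip ?unzip2_zip ?Hs //.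
Qed.

Lemma memDes u i : (i \in Des u) = (0 < i < size u) && (nth 0 u i <= nth 0 u i.-1).
Proof.
rewrite /Des mem_filter mem_iota /letter /= andbC; congr (_ && _).
case: i => //= i; case: (size u) => //= m; lia.
Qed.

Lemma sorted_Des u v : size u = size v -> sorted leq u ->
  ({subset Des u <= Des v} <-> sorted burge_le (zip u v)).
Proof.
move=> Hs /(sortedP 0) Hu; split.
- move=> H; apply/(sortedP (0,0)) => j; rewrite size_zip Hs minnn => Hj.
  rewrite !nth_zip // /burge_le /=.
  have := Hu j; rewrite Hs => /(_ Hj) Hle.
  case: ltngtP => //= Heq.
  all: try lia.
  have : j.+1 \in Des u by rewrite memDes /= Hs Hj Heq; lia.
  by move/H; rewrite memDes; case/andP.
- move/(sortedP (0,0)) => H i; rewrite !memDes -Hs => /andP[/andP[Hi0 Hi] Hle].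
  rewrite Hi0 Hi /=.
  case: i Hi0 Hi Hle => // j _ Hj Hle /=.
  have := H j; rewrite size_zip Hs minnn -Hs => /(_ Hj).
  rewrite !nth_zip // /burge_le /=. have := Hu j Hj. simpl in Hle; lia.
Qed.

Lemma wmaxE v : wmax v = \max_(x <- v) x.
Proof. by elim: v => [|x v IH]; rewrite ?big_nil ?big_cons //= IH. Qed.

Lemma Cay_perm n v v' : perm_eq v v' -> Cay n v = Cay n v'.
Proof.
move=> P; rewrite /Cay (perm_size P) (perm_all _ P) !wmaxE (perm_big _ P).
congr [&& _, _ & _]; apply: eq_all => k; exact: perm_mem.
Qed.

Lemma P1 n u v : WI n u -> Cay n v ->
     ({subset Des u <= Des v} <-> burgeT (burgeT (u, v)) = (u, v)).
Proof.
move=> /andP[/and3P[/eqP Su _ _] So] /and3P[/eqP Sv _ _].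
have Hs : size u = size v by congruence.
exact: (iff_trans (@sorted_Des u v Hs So) (iff_sym (@TT_sorted u v Hs))).
Qed.

Lemma perm1 u v : size u = size v -> perm_eq (burgeT (u,v)).1 v.
Proof.
move=> Hs; rewrite /burgeT /=.
have {2}-> : v = unzip1 [seq (p.2, p.1) | p <- zip u v].
  transitivity (unzip2 (zip u v)); first by rewrite unzip2_zip ?Hs.
  by rewrite /unzip1 /unzip2 -map_comp.
by apply: perm_map; rewrite perm_sort.
Qed.

Lemma perm2 u v : size u = size v -> perm_eq (burgeT (u,v)).2 u.
Proof.
move=> Hs; rewrite /burgeT /=.
have {2}-> : u = unzip2 [seq (p.2, p.1) | p <- zip u v].
  transitivity (unzip1 (zip u v)); first by rewrite unzip1_zip ?Hs.
  by rewrite /unzip1 /unzip2 -map_comp.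
by apply: perm_map; rewrite perm_sort.
Qed.

Theorem lemma3p1 (n : nat) :
  (forall u v : seq nat, WI n u -> Cay n v ->
     ({subset Des u <= Des v} <-> burgeT (burgeT (u, v)) = (u, v))) /\
  (forall w : seq nat * seq nat, Bur n w ->
     Bur n (burgeT w) /\ burgeT (burgeT w) = w).
Proof.
split; first exact: P1.
case=> u v /and3P[Hu Hv HD] /=.
have TT : burgeT (burgeT (u,v)) = (u,v) by apply/(@P1 n u v Hu Hv); apply/allP.
split => //.
have Hs : size u = size v.
  by case/andP: Hu => /and3P[/eqP -> _ _]; case/and3P: Hv => /eqP ->.
have Pa := @perm1 u v Hs; have Pc := @perm2 u v Hs.
have Sa : sorted leq (burgeT (u,v)).1.
  rewrite /burgeT /= sorted_map; apply: sub_sorted (sort_sorted bl_total _).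
  by move=> [a b] [c d]; rewrite /burge_le /=; lia.
have Wa : WI n (burgeT (u,v)).1 by rewrite /WI Sa (@Cay_perm n _ _ Pa) Hv.
have Cc : Cay n (burgeT (u,v)).2 by rewrite (@Cay_perm n _ _ Pc); case/andP: Hu.
have TT2 : burgeT (burgeT (burgeT (u,v))) = burgeT (u,v).
  rewrite burgeTT {1 2 5}/burgeT /= zip_unzip (sorted_sort bl_trans) ?(sort_sorted bl_total) //.
rewrite /Bur Wa Cc /=; apply/allP => i.
have := (@P1 n _ _ Wa Cc).2; rewrite -surjective_pairing => /(_ TT2); exact.
Qed.
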